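(* Let $n$ be even, let $r\le s\le 2r-1$, and let $m=s-r+1$ (the number of edges of $P^{(r)}_s$). Then $$\tau(n,P^{(r)}_s)\le \tau(n,LP^{(r)}_s)\le 2h(n,r,m)+h(n,r-1,m).$$
   Context: An ordered $r$-uniform hypergraph is an $r$-uniform hypergraph whose vertex set is linearly ordered. $K^{(r)}_n$ denotes the ordered complete $r$-uniform hypergraph on vertex set $[n]=\{1,\dots,n\}$ (natural order), whose edges are all $r$-subsets of $[n]$. A copy of an ordered hypergraph $H$ in $K^{(r)}_n$ is the image of $H$ under an order-preserving injection $f:V(H)\to[n]$ (its edges being the images $f(e)$, $e\in E(H)$). The natural (tight) path $P^{(r)}_s$ has vertices $v_1<\dots<v_s$ and its edges are all sets of $r$ consecutive vertices $\{v_j,\dots,v_{j+r-1}\}$, $1\le j\le s-r+1$. The loose path $LP^{(r)}_s$ is obtained from $P^{(r)}_s$ by keeping only its first edge $\{v_1,\dots,v_r\}$ and its last edge $\{v_{s-r+1},\dots,v_s\}$ (same vertex set and order). For an ordered $r$-uniform $H$, an $H$-transversal is a set of edges of $K^{(r)}_n$ meeting (the edge set of) every copy of $H$ in $K^{(r)}_n$, and $\tau(n,H)$ is the minimum size of an $H$-transversal. An interval partition $(X,Y,Z)$ of $[n]$ consists of consecutive (possibly empty) intervals $X<Y<Z$ with union $[n]$. A set $S\subseteq[n]$ is $m$-left-biased if there is an interval partition $(X,Y,Z)$ of $[n]$ with $|X|=|Z|$, $|X\cap S|=m$ and $|Z\cap S|=0$. $h(n,t,m)$ denotes the number of $t$-subsets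 of $[n]$ that are $m$-left-biased. *)

(* Defs.v *)
From mathcomp Require Import all_boot.
Set Implicit Arguments. Unset Strict Implicit. Unset Printing Implicit Defensive.

(* Vertex set [n] is represented by 'I_n = {0,...,n-1} with its natural order
   (order-isomorphic to {1,...,n}).  An ordered r-uniform hypergraph on s
   vertices is an edge set E : {set {set 'I_s}}. *)

(* order-preserving injection = strictly increasing map *)
Definition strict_incr s n (f : {ffun 'I_s -> 'I_n}) : bool :=
  [forall i : 'I_s, forall j : 'I_s, (i < j) ==> (f i < f j)].

Definition is_transversal n r s (E : {set {set 'I_s}}) (T : {set {set 'I_n}}) : bool :=
  [forall e in T, #|e| == r] &&
  [forall f : {ffun 'I_s -> 'I_n}, strict_incr f ==> [exists e in E, (f @: e) \in T]].

Definition rsets n r : {set {set 'I_n}} := [set e : {set 'I_n} | #|e| == r].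

(* tau(n,H): minimum size of an H-transversal (the default value #|rsets n r|
   is an upper bound on the size of every transversal) *)
Definition tau n r s (E : {set {set 'I_s}}) : nat :=
  \big[minn/#|rsets n r|]_(T : {set {set 'I_n}} | is_transversal r E T) #|T|.

Definition seg s j r : {set 'I_s} := [set i : 'I_s | (j <= i) && (i < j + r)].

Definition tight_path r s : {set {set 'I_s}} :=
  [set e : {set 'I_s} | [exists j : 'I_s.+1, (j + r <= s) && (e == seg s j r)]].

Definition loose_path r s : {set {set 'I_s}} := [set seg s 0 r; seg s (s - r) r].

(* S is m-left-biased: there is an interval partition (X,Y,Z) of [n] with
   |X| = |Z| = a, i.e. X = [0,a), Z = [n-a,n), 2a <= n,
   |X ∩ S| = m and Z ∩ S = ∅. *)
Definition left_biased n m (S : {set 'I_n}) : bool :=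
  [exists a : 'I_n.+1, (a + a <= n) &&
     (#|[set i in S | i < a]| == m) && ([set i in S | n - a <= i] == set0)].

Definition h n t m : nat := #|[set S : {set 'I_n} | (#|S| == t) && left_biased m S]|.

(* Main.v *)
Require Import Defs.
From mathcomp Require Import all_boot zify.
Set Implicit Arguments. Unset Strict Implicit. Unset Printing Implicit Defensive.

Lemma tau_le (n r s : nat) (E : {set {set 'I_s}}) (T : {set {set 'I_n}}) : Defs.is_transversal r E T -> tau n r E <= #|T|.
Proof.
move=> HT; rewrite /tau.
have : T \in index_enum {set {set 'I_n}} by rewrite mem_index_enum.
elim: (index_enum _) => [//|x l IH]; rewrite inE big_cons => /orP[/eqP<-|hl].
  by rewrite HT geq_minl.
by case: ifP => _; rewrite ?geq_min IH ?orbT.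
Qed.

Lemma tau_le_C (n r s : nat) (E : {set {set 'I_s}}) : tau n r E <= #|rsets n r|.
Proof.
rewrite /tau; apply: (big_ind (fun x => x <= #|rsets n r|)) => //.
  by move=> x y hx hy; rewrite geq_min hx.
move=> T /andP[/forallP HT _]; apply: subset_leq_card; apply/subsetP => e he.
by rewrite inE; have := HT e; rewrite he.
Qed.

Lemma tau_mono (n r s : nat) (E E' : {set {set 'I_s}}) : E \subset E' -> tau n r E' <= tau n r E.
Proof.
move=> sEE'; rewrite {2}/tau; apply: (big_ind (fun x => tau n r E' <= x)).
- exact: tau_le_C.
- by move=> x y hx hy; rewrite leq_min hx.
move=> T /andP[HT /forallP Hf]; apply: tau_le; rewrite /Defs.is_transversal HT /=.
apply/forallP => f; apply/implyP => hf; have /existsP[e /andP[he hT]] := implyP (Hf f) hf.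
by apply/existsP; exists e; rewrite hT (subsetP sEE').
Qed.

Lemma card_seg s lo len : lo + len <= s -> #|seg s lo len| = len.
Proof.
elim: len => [|len IH] H.
  apply/eqP; rewrite cards_eq0; apply/eqP/setP => i; rewrite !inE; lia.
have H' : lo + len < s by lia.
have -> : seg s lo len.+1 = Ordinal H' |: seg s lo len.
  apply/setP => i; rewrite !inE -val_eqE /=; lia.
rewrite cardsU1 IH; last lia.
by rewrite !inE /=; rewrite ltnn andbF.
Qed.

Lemma sincr_lt s n (f : {ffun 'I_s -> 'I_n}) i j : strict_incr f -> (f i < f j) = (i < j).
Proof.
move=> /forallP H.
case: (ltngtP i j) => hij.
- by have := forallP (H i) j; rewrite hij.
- by have := forallP (H j) i; rewrite hij /= => h; apply/negbTE; rewrite -leqNgt ltnW.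
- have -> : i = j by apply: val_inj.
  by rewrite ltnn.
Qed.

Lemma sincr_le s n (f : {ffun 'I_s -> 'I_n}) i j : strict_incr f -> (f i <= f j) = (i <= j).
Proof. by move=> H; rewrite leqNgt (@sincr_lt _ _ f j i H) -leqNgt. Qed.

Lemma sincr_inj s n (f : {ffun 'I_s -> 'I_n}) : strict_incr f -> injective f.
Proof.
by move=> H i j e; apply: val_inj; apply/eqP; rewrite eqn_leq -(@sincr_le _ _ f i j H) -(@sincr_le _ _ f j i H) e leqnn.
Qed.

Lemma setI_imset (T U : finType) (g : T -> U) (C : {set T}) (P : pred U) :
  [set i in g @: C | P i] = g @: [set c in C | P (g c)].
Proof.
apply/setP => u; rewrite inE; apply/andP/imsetP.
  by case=> /imsetP[c hc ->] hP; exists c; rewrite // inE hc.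
by case=> c; rewrite inE => /andP[hc hP] ->; split; [apply: imset_f|].
Qed.

Lemma lb_img n s (g : 'I_s -> 'I_n) (I : {set 'I_s}) m (a : nat) :
  injective g -> a + a <= n -> #|[set j in I | g j < a]| = m ->
  (forall j, j \in I -> g j < n - a) -> left_biased m (g @: I).
Proof.
move=> ig ha hc hz; apply/existsP.
have ha' : a < n.+1 by lia.
exists (Ordinal ha'); rewrite /= ha /= setI_imset card_imset // hc eqxx /=.
apply/eqP/setP => i; rewrite inE in_set0; apply/negbTE; apply/negP => /andP[/imsetP[j hj ->]].
by have := hz j hj; lia.
Qed.

Definition Hset (n t m : nat) : {set {set 'I_n}} :=
  [set S : {set 'I_n} | (#|S| == t) && left_biased m S].
Definition mth (n m : nat) (S : {set 'I_n}) := [pick x in S | #|[set i in S | i < x]| == m.-1].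
Definition addm (n m : nat) (S : {set 'I_n}) :=
  if @mth n m S is Some x then S :|: [set rev_ord x] else S.
Definition Tset (n r m : nat) : {set {set 'I_n}} :=
  [set e in (Hset n r m :|: [set (@rev_ord n) @: S | S : {set 'I_n} in Hset n r m])
       :|: [set @addm n m S | S : {set 'I_n} in Hset n (r-1) m] | #|e| == r].

Lemma Tset_card n r m : #|Tset n r m| <= 2 * h n r m + h n (r-1) m.
Proof.
rewrite /Tset.
set X := (_ :|: _ :|: _).
have h1 : #|[set e in X | #|e| == r]| <= #|X|.
  by apply: subset_leq_card; apply/subsetP => e; rewrite inE => /andP[].
apply: (leq_trans h1); rewrite /X.
apply: (leq_trans (leq_card_setU _ _).1).
have h2 := (leq_card_setU (Hset n r m) [set (@rev_ord n) @: S | S : {set 'I_n} in Hset n r m]).1.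
have h3 := leq_imset_card (fun S : {set 'I_n} => (@rev_ord n) @: S) (Hset n r m).
have h4 := leq_imset_card (@addm n m) (Hset n (r-1) m).
rewrite /h -/(Hset n r m) -/(Hset n (r-1) m).
rewrite mul2n -addnn; apply: leq_add; first by apply: (leq_trans h2); rewrite leq_add2l; exact: h3.
exact: h4.
Qed.

Lemma Tset_trans n r s m :
  ~~ odd n -> 0 < r -> r <= s -> s <= 2 * r - 1 -> m = s - r + 1 ->
  Defs.is_transversal r (loose_path r s) (Tset n r m).
Proof.
move=> hn hr hrs hs2 hm.
apply/andP; split.
  by apply/forallP => e; apply/implyP; rewrite inE => /andP[].
apply/forallP => f; apply/implyP => Hf.
have fi := sincr_inj Hf.
have h1s : m.-1 < s by lia.
have h2s : r.-1 < s by lia.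
pose i1 := Ordinal h1s. pose i2 := Ordinal h2s.
pose x := nat_of_ord (f i1). pose y := nat_of_ord (f i2).
have ex : nat_of_ord (f i1) = x by []. have ey : nat_of_ord (f i2) = y by [].
clearbody x y.
have hxy : x <= y by rewrite -ex -ey sincr_le //= ; lia.
have hyn : y < n by rewrite -ey; apply: ltn_ord.
have [hlt|hgt|heq] := ltngtP (x + y) n.-1.
-
  apply/existsP; exists (seg s 0 r); rewrite !inE eqxx /=.
  rewrite card_imset // card_seg ?eqxx ?andbT; last lia.
  apply/orP; left; apply/orP; left => /=.
  apply: (lb_img (a := x.+1)) => //; first lia.
  + have -> : [set j in seg s 0 r | f j < x.+1] = seg s 0 m.
      apply/setP => j; rewrite !inE ltnS -ex sincr_le //=; lia.
    by rewrite card_seg //; lia.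
  + move=> j; rewrite inE => hj.
    have : f j <= y by rewrite -ey sincr_le //=; lia.
    move=> hfj; set z := nat_of_ord (f j) in hfj *; lia.
-
  apply/existsP; exists (seg s (s - r) r); rewrite !inE eqxx orbT /=.
  rewrite card_imset // card_seg ?eqxx ?andbT; last lia.
  apply/orP; left; apply/orP; right.
  have gi : injective (@rev_ord n \o f) by apply: inj_comp => //; apply: rev_ord_inj.
  apply/imsetP; exists ((@rev_ord n \o f) @: seg s (s - r) r).
    rewrite inE card_imset // card_seg ?eqxx /=; last lia.
    apply: (lb_img (a := n - y)) => //; first lia.
    + have -> : [set j in seg s (s - r) r | (@rev_ord n \o f) j < n - y] = seg s r.-1 (s - r.-1).
        apply/setP => j; rewrite !inE /=.
        have hf := ltn_ord (f j).
        have e1 : (n - (f j).+1 < n - y) = (y <= f j) by apply/idP/idP; lia.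
        rewrite e1 -ey sincr_le //=; lia.
      by rewrite card_seg; lia.
    + move=> j; rewrite inE /= => hj.
      have : x <= f j by rewrite -ex sincr_le //=; lia.
      move=> hfj; set z := nat_of_ord (f j) in hfj *; lia.
  rewrite -imset_comp; apply: eq_imset => j /=; by rewrite rev_ordK.
-
  have hmr : m < r.
    case: (ltngtP m r) => hmr //; first lia.
    have exy : x = y by rewrite -ex -ey; congr (nat_of_ord (f _)); apply: val_inj; rewrite /= hmr.
    have : n = (x + x).+1 by lia.
    by move=> en; move: hn; rewrite en /= addnn odd_double.
  have hxy' : x < y by rewrite -ex -ey sincr_lt //=; lia.
  apply/existsP; exists (seg s 0 r); rewrite !inE eqxx /=.
  rewrite card_imset // card_seg ?eqxx ?andbT; last lia.
  apply/orP; right.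
  have HA : f @: seg s 0 (r - 1) \in Hset n (r - 1) m.
    rewrite inE card_imset // card_seg ?eqxx /=; last lia.
    apply: (lb_img (a := x.+1)) => //; first lia.
    + have -> : [set j in seg s 0 (r - 1) | f j < x.+1] = seg s 0 m.
        apply/setP => j; rewrite !inE ltnS -ex sincr_le //=; lia.
      by rewrite card_seg //; lia.
    + move=> j; rewrite inE => hj.
      have : f j < y by rewrite -ey sincr_lt //=; lia.
      move=> hfj; set z := nat_of_ord (f j) in hfj *; lia.
  apply/imsetP; exists (f @: seg s 0 (r - 1)) => //.
  have Hcnt : forall j, j \in seg s 0 (r - 1) ->
      #|[set i in f @: seg s 0 (r - 1) | i < f j]| = j.
    move=> j hj; rewrite setI_imset card_imset //.
    have -> : [set c in seg s 0 (r - 1) | f c < f j] = seg s 0 j.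
      apply/setP => c; rewrite !inE sincr_lt //; move: hj; rewrite inE; lia.
    by rewrite card_seg //; move: hj; rewrite inE; lia.
  rewrite /addm /mth; case: pickP => [z /andP[hz hc] | hnone].
    case/imsetP: hz hc => j hj ->; rewrite Hcnt // => /eqP hj1.
    have -> : j = i1 by apply: val_inj; rewrite /= hj1.
    have -> : rev_ord (f i1) = f i2 by apply: val_inj; rewrite /= ex ey; lia.
    have -> : seg s 0 r = i2 |: seg s 0 (r - 1).
      apply/setP => c; rewrite !inE -val_eqE /=; lia.
    by rewrite imsetU1 setUC.
  have := hnone (f i1); rewrite imset_f ?Hcnt /= ?eqxx //; rewrite inE /=; lia.
Qed.

Unset Implicit Arguments.
Theorem theorem2p1 (n r s m : nat) :
  ~~ odd n -> 0 < r -> r <= s -> s <= 2 * r - 1 -> m = s - r + 1 ->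
  tau n r (tight_path r s) <= tau n r (loose_path r s) /\
  tau n r (loose_path r s) <= 2 * h n r m + h n (r - 1) m.
Proof.
move=> hn hr hrs hs2 hm; split.
  apply: tau_mono; apply/subsetP => e; rewrite !inE => /orP[/eqP->|/eqP->];
    apply/existsP.
    by exists ord0; rewrite /= add0n hrs eqxx.
  exists (inord (s - r)); rewrite inordK; last lia.
  by rewrite subnK // leqnn eqxx.
exact: leq_trans (tau_le (Tset_trans hn hr hrs hs2 hm)) (Tset_card n r m).
Qed.
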